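(* Let $p,q\in\mathbb{N}$ be coprime, $k\in\mathbb{N}$ squarefree, $m=-pk$, $n=qk$. (i) If the quadratic forms $X^2+mY^2$ and $X^2+nY^2$ are concordant due to $4$- or $8$-torsion, then $k=1$. (ii) If they are concordant due to $3$- or $6$-torsion, then $k=1$ or $k=3$.
   Context: For nonzero integers $m\neq n$, the forms $X^2+mY^2$ and $X^2+nY^2$ are concordant if the system $X^2+mY^2=Z^2$, $X^2+nY^2=W^2$ has an integer solution with $Y\neq0$. Let $Q(m,n)\subset\mathbb{P}^3$ be the curve $X_0^2+mX_1^2=X_2^2,\ X_0^2+nX_1^2=X_3^2$ and $E(m,n)$ the elliptic curve $y^2=x(x+m)(x+n)$ (projectively $Y^2T=X(X+mT)(X+nT)$, coordinates $(T:X:Y)$). There is an isomorphism of curves $\varphi:Q(m,n)\to E(m,n)$ extending the rational map $(X_0:X_1:X_2:X_3)\mapsto\bigl(nX_2-mX_3+(m-n)X_0 : mn(X_3-X_2) : mn(m-n)X_1\bigr)$; it maps the trivial points $(1:0:\pm1:\pm1)$ to the neutral element and the 2-torsion points, and every nontrivial rational solution to a rational point of order $>2$. The forms are said to be concordant due to $N$-torsion if some nontrivial rational solution $(X_0:X_1:X_2:X_3)$ (i.e. with $X_1\neq0$) is mapped by $\varphi$ to a rational point of $E(m,n)$ of order exactly $N$; equivalently, $E(m,n)(\mathbb{Q})$ has a point of order $N$. *)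

(* Defs.v *)
From HB Require Import structures.
From mathcomp Require Import all_boot all_order all_algebra.
Set Implicit Arguments. Unset Strict Implicit. Unset Printing Implicit Defensive.
Import Order.TTheory GRing.Theory Num.Theory.
Local Open Scope ring_scope.

(* A point of the projective Weierstrass curve: the neutral element
   (point at infinity, (T:X:Y) = (0:0:1)) or an affine point (x, y). *)
Inductive ecpt : Type := EInf | EPt of rat & rat.

Definition on_E (m n : int) (P : ecpt) : Prop :=
  match P with
  | EInf => True
  | EPt x y => y ^+ 2 = x * (x + m%:~R) * (x + n%:~R)
  end.

(* Chord-tangent group law on y^2 = x^3 + a x^2 + b x with a = m+n, b = m n. *)
Definition ec_add (m n : int) (P Q : ecpt) : ecpt :=
  let a : rat := (m + n)%:~R in
  let b : rat := (m * n)%:~R in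
  match P, Q with
  | EInf, _ => Q
  | _, EInf => P
  | EPt x1 y1, EPt x2 y2 =>
      if (x1 == x2) && (y1 == - y2) then EInf
      else
        let l := if x1 == x2 then (3%:R * x1 ^+ 2 + 2%:R * a * x1 + b) / (2%:R * y1)
                 else (y2 - y1) / (x2 - x1) in
        let x3 := l ^+ 2 - a - x1 - x2 in
        EPt x3 (- (y1 + l * (x3 - x1)))
  end.

Fixpoint ec_mul (m n : int) (d : nat) (P : ecpt) : ecpt :=
  match d with
  | O => EInf
  | S d' => ec_add m n P (ec_mul m n d' P)
  end.

Definition has_order (m n : int) (P : ecpt) (N : nat) : Prop :=
  (0 < N)%N /\ ec_mul m n N P = EInf /\
  forall d : nat, (0 < d)%N -> (d < N)%N -> ec_mul m n d P <> EInf.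

(* The isomorphism phi : Q(m,n) -> E(m,n), on points with X1 <> 0:
   (X0:X1:X2:X3) |-> (T:X:Y) = (n X2 - m X3 + (m-n) X0 : mn(X3-X2) : mn(m-n) X1). *)
Definition phi (m n : int) (X0 X1 X2 X3 : rat) : ecpt :=
  let M : rat := m%:~R in
  let N : rat := n%:~R in
  let T := N * X2 - M * X3 + (M - N) * X0 in
  let X := M * N * (X3 - X2) in
  let Y := M * N * (M - N) * X1 in
  if T == 0 then EInf else EPt (X / T) (Y / T).

(* The forms X^2+mY^2, X^2+nY^2 are concordant due to N-torsion: some
   nontrivial rational point (X1 <> 0) of Q(m,n) is mapped by phi to a point
   of order exactly N of E(m,n)(Q). *)
Definition concordant_torsion (N : nat) (m n : int) : Prop :=
  exists X0 X1 X2 X3 : rat,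
    [/\ X0 ^+ 2 + m%:~R * X1 ^+ 2 = X2 ^+ 2,
        X0 ^+ 2 + n%:~R * X1 ^+ 2 = X3 ^+ 2,
        X1 != 0 &
        has_order m n (phi m n X0 X1 X2 X3) N].

Definition squarefree (k : nat) : Prop :=
  (0 < k)%N /\ forall d : nat, (1 < d)%N -> ~~ (d * d %| k)%N.

(* Main.v *)
Require Import Defs.
From HB Require Import structures.
From mathcomp Require Import all_boot all_order all_algebra.
From mathcomp Require Import ring lra zify.
Import Order.TTheory GRing.Theory Num.Theory.
Set Implicit Arguments. Unset Strict Implicit. Unset Printing Implicit Defensive.
Local Open Scope ring_scope.

Definition cf (M N t : rat) := t * (t + M) * (t + N).
Definition cfd (M N t : rat) := 3%:R * t ^+ 2 + 2%:R * (M + N) * t + M * N.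
Definition Rel (M N c l x1 x2 x3 : rat) : Prop :=
  [/\ M + N - l ^+ 2 + (x1 + x2 + x3) = 0,
      M * N - 2%:R * c * l - (x1 * x2 + x1 * x3 + x2 * x3) = 0 &
      x1 * x2 * x3 - c ^+ 2 = 0].

Lemma Rel_poly M N c l x1 x2 x3 t : Rel M N c l x1 x2 x3 ->
  cf M N t - (c + l * t) ^+ 2 = (t - x1) * (t - x2) * (t - x3).
Proof.
case=> h1 h2 h3; apply/eqP; rewrite -subr_eq0; apply/eqP.
transitivity (t ^+ 2 * (M + N - l ^+ 2 + (x1 + x2 + x3))
  + t * (M * N - 2%:R * c * l - (x1 * x2 + x1 * x3 + x2 * x3))
  + (x1 * x2 * x3 - c ^+ 2)); first by rewrite /cf; ring.
by rewrite h1 h2 h3; ring.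
Qed.

Lemma Rel_sym12 M N c l x1 x2 x3 : Rel M N c l x1 x2 x3 -> Rel M N c l x2 x1 x3.
Proof.
case=> h1 h2 h3; split.
- by rewrite -h1; ring.
- by rewrite -h2; ring.
- by rewrite -h3; ring.
Qed.

Lemma Rel_sym13 M N c l x1 x2 x3 : Rel M N c l x1 x2 x3 -> Rel M N c l x3 x2 x1.
Proof.
case=> h1 h2 h3; split.
- by rewrite -h1; ring.
- by rewrite -h2; ring.
- by rewrite -h3; ring.
Qed.

Lemma Rel_neg M N c l x1 x2 x3 : Rel M N c l x1 x2 x3 -> Rel M N (-c) (-l) x1 x2 x3.
Proof.
case=> h1 h2 h3; split.
- by rewrite -h1; ring.
- by rewrite -h2; ring.
- by rewrite -h3; ring.
Qed.

Lemma nonsing M N x : M != 0 -> N != 0 -> M != N ->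
  cf M N x = 0 -> cfd M N x = 0 -> False.
Proof.
move=> hM hN hMN; rewrite /cf /cfd => /eqP; rewrite !mulf_eq0 => /orP[/orP[]|] /eqP h.
- rewrite h => /eqP; rewrite (_ : _ + _ = M * N); last by ring.
  by rewrite mulf_eq0 (negbTE hM) (negbTE hN).
- have -> : x = - M by rewrite -[x]subr0 -h; ring.
  move/eqP; rewrite (_ : _ + _ = M * (M - N)); last by ring.
  by rewrite mulf_eq0 subr_eq0 (negbTE hM) (negbTE hMN).
- have -> : x = - N by rewrite -[x]subr0 -h; ring.
  move/eqP; rewrite (_ : _ + _ = N * (N - M)); last by ring.
  by rewrite mulf_eq0 subr_eq0 (negbTE hN) eq_sym (negbTE hMN).
Qed.

Lemma lin2 (al be x1 x2 : rat) : al * x1 + be = 0 -> al * x2 + be = 0 -> x1 != x2 ->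
  al = 0 /\ be = 0.
Proof.
move=> h1 h2 hne.
have hal : al = 0.
  have : al * (x1 - x2) = 0 by rewrite mulrBr -[al * x1](addrK be) h1 -[al * x2](addrK be) h2; ring.
  by move/eqP; rewrite mulf_eq0 subr_eq0 (negbTE hne) orbF => /eqP.
by split => //; move: h1; rewrite hal mul0r add0r.
Qed.

Lemma lin1 (al be x1 : rat) : al * x1 + be = 0 -> al = 0 -> be = 0.
Proof. by move=> h1 h; move: h1; rewrite h mul0r add0r. Qed.

Lemma rel_of_line M N c l x1 x2 x3 :
  (c + l * x1) ^+ 2 = cf M N x1 -> (c + l * x2) ^+ 2 = cf M N x2 ->
  x3 = l ^+ 2 - (M + N) - x1 - x2 ->
  (x1 != x2 \/ (x1 = x2 /\ cfd M N x1 = 2%:R * l * (c + l * x1))) ->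
  Rel M N c l x1 x2 x3.
Proof.
move=> e1 e2 -> hcase.
have hA1 : (M * N - 2%:R * c * l - (x1 * x2 + x1 * (l ^+ 2 - (M + N) - x1 - x2)
   + x2 * (l ^+ 2 - (M + N) - x1 - x2))) * x1
   + (x1 * x2 * (l ^+ 2 - (M + N) - x1 - x2) - c ^+ 2) = 0.
  rewrite -[RHS](subrr (cf M N x1)) -{2}e1 /cf; ring.
have hA2 : (M * N - 2%:R * c * l - (x1 * x2 + x1 * (l ^+ 2 - (M + N) - x1 - x2)
   + x2 * (l ^+ 2 - (M + N) - x1 - x2))) * x2
   + (x1 * x2 * (l ^+ 2 - (M + N) - x1 - x2) - c ^+ 2) = 0.
  rewrite -[RHS](subrr (cf M N x2)) -{2}e2 /cf; ring.
move: hA1 hA2.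
set al := (M * N - _ - _); set be := (x1 * x2 * _ - c ^+ 2) => hA1 hA2.
have hal : al = 0.
  case: hcase => [hne|[ex hd]]; first by case: (lin2 hA1 hA2 hne).
  rewrite /al -ex; transitivity (cfd M N x1 - 2%:R * l * (c + l * x1)); first by rewrite /cfd; ring.
  by rewrite hd subrr.
split; last by rewrite -/be (lin1 hA1 hal).
  ring.
by rewrite -hal.
Qed.

Lemma Rel_tan M N c l x x3 : Rel M N c l x x x3 -> cfd M N x = 2%:R * l * (c + l * x).
Proof.
case=> h1 h2 h3; apply/eqP; rewrite -subr_eq0; apply/eqP.
transitivity (2%:R * x * (M + N - l ^+ 2 + (x + x + x3)) +
   (M * N - 2%:R * c * l - (x * x + x * x3 + x * x3))); first by rewrite /cfd; ring.
by rewrite h1 h2; ring.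
Qed.

Lemma Rel_on M N c l x1 x2 x3 : Rel M N c l x1 x2 x3 -> (c + l * x3) ^+ 2 = cf M N x3.
Proof.
move=> /(Rel_poly x3); rewrite subrr mulr0 => /eqP; rewrite subr_eq0 => /eqP <-. by [].
Qed.

Lemma Rel_on1 M N c l x1 x2 x3 : Rel M N c l x1 x2 x3 -> (c + l * x1) ^+ 2 = cf M N x1.
Proof.
move=> /(Rel_poly x1); rewrite subrr !mul0r => /eqP; rewrite subr_eq0 => /eqP <-. by [].
Qed.

Lemma CL (m n : int) c l xA xB xC :
  m%:~R != 0 :> rat -> n%:~R != 0 :> rat -> m%:~R != n%:~R :> rat ->
  Rel m%:~R n%:~R c l xA xB xC ->
  ec_add m n (EPt xA (c + l * xA)) (EPt xB (c + l * xB)) = EPt xC (- (c + l * xC)).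
Proof.
move=> hM hN hMN hR; rewrite /ec_add intrD intrM.
case: (eqVneq xA xB) => [ex|hne].
- subst xB; rewrite /=.
  have ht := Rel_tan hR.
  case: eqP => [hy|hy].
  + exfalso; have hy0 : c + l * xA = 0.
      by move: hy; set y := c + l * xA => hy; lra.
    apply: (@nonsing _ _ xA hM hN hMN).
    * by rewrite -(Rel_on1 hR) hy0 expr0n.
    * by rewrite ht hy0 mulr0.
  + have hy0 : c + l * xA != 0 by apply: contra_not_neq hy => ->; rewrite oppr0.
    have -> : (3%:R * xA ^+ 2 + 2%:R * (m%:~R + n%:~R) * xA + m%:~R * n%:~R) / (2%:R * (c + l * xA)) = l.
      by rewrite -/(cfd _ _ xA) ht; field.
    case: hR => h1 _ _.
    have ex : l ^+ 2 - (m%:~R + n%:~R) - xA - xA = xC.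
      by move: h1; set L := l ^+ 2; lra.
    by rewrite ex; congr EPt; ring.
- rewrite ?(negbTE hne) /=.
  have -> : (c + l * xB - (c + l * xA)) / (xB - xA) = l.
    by field; rewrite subr_eq0 eq_sym.
  case: hR => h1 _ _.
  have ex : l ^+ 2 - (m%:~R + n%:~R) - xA - xB = xC.
    by move: h1; set L := l ^+ 2; lra.
  by rewrite ex; congr EPt; ring.
Qed.

Lemma FL (m n : int) x1 y1 x2 y2 x3 y3 :
  y1 ^+ 2 = cf m%:~R n%:~R x1 -> y2 ^+ 2 = cf m%:~R n%:~R x2 ->
  ec_add m n (EPt x1 y1) (EPt x2 y2) = EPt x3 y3 ->
  exists c l, [/\ Rel m%:~R n%:~R c l x1 x2 x3, y1 = c + l * x1,
                  y2 = c + l * x2 & y3 = - (c + l * x3)].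
Proof.
move=> e1 e2; rewrite /ec_add intrD intrM.
case: (eqVneq x1 x2) => [ex|hne].
- subst x2; rewrite ?eqxx /=.
  case: eqP => // hy [Ex3 Ey3].
  have hy12 : y2 = y1.
    move: (e2); rewrite -e1 => /eqP; rewrite eqf_sqr => /orP[/eqP //|/eqP h].
    by exfalso; apply: hy; rewrite h opprK.
  subst y2.
  have hy0 : y1 != 0 by apply: contra_not_neq hy => ->; rewrite oppr0.
  set l := (3%:R * x1 ^+ 2 + 2%:R * (m%:~R + n%:~R) * x1 + m%:~R * n%:~R) / (2%:R * y1).
  have hc : y1 = (y1 - l * x1) + l * x1 by ring.
  exists (y1 - l * x1), l; split => //.
  + apply: rel_of_line; rewrite -?hc //.
    right; split => //; rewrite /l /cfd; field; done.
  + by rewrite -Ey3 -Ex3 /l; ring.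
- rewrite ?(negbTE hne) /= => -[Ex3 Ey3].
  set l := (y2 - y1) / (x2 - x1).
  have hc : y1 = (y1 - l * x1) + l * x1 by ring.
  have hc2 : y2 = (y1 - l * x1) + l * x2.
    by rewrite /l; field; rewrite subr_eq0 eq_sym.
  exists (y1 - l * x1), l; split => //.
  + apply: rel_of_line; rewrite -?hc -?hc2 //; last by left.
  + by rewrite -Ey3 -Ex3 /l; ring.
Qed.

Definition negp (P : ecpt) := match P with EInf => EInf | EPt x y => EPt x (- y) end.

Definition NS (m n : int) := [/\ m%:~R != 0 :> rat, n%:~R != 0 :> rat & m%:~R != n%:~R :> rat].

Lemma addP0 m n P : ec_add m n P EInf = P.
Proof. by case: P. Qed.

Lemma add_inf m n x y Q : ec_add m n (EPt x y) Q = EInf -> Q = EPt x (- y).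
Proof.
case: Q => // x2 y2; rewrite /ec_add /=.
case: ifP => // /andP[/eqP <- /eqP ->] _; by rewrite opprK.
Qed.

Lemma add_negr m n x y : ec_add m n (EPt x y) (EPt x (- y)) = EInf.
Proof. by rewrite /ec_add /= eqxx opprK eqxx. Qed.

Lemma negpK P : negp (negp P) = P.
Proof. by case: P => //= x y; rewrite opprK. Qed.

Lemma on_neg m n P : on_E m n P -> on_E m n (negp P).
Proof. by case: P => //= x y; rewrite sqrrN. Qed.

Lemma add_on m n P Q : NS m n -> on_E m n P -> on_E m n Q -> on_E m n (ec_add m n P Q).
Proof.
move=> _; case: P => [|x1 y1] //; case: Q => [|x2 y2] // e1 e2.
case E: (ec_add m n _ _) => [|x3 y3] //.
have [c [l [hR _ _ ->]]] := FL e1 e2 E.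
by rewrite /= sqrrN (Rel_on hR).
Qed.

Lemma add_comm m n P Q : NS m n -> on_E m n P -> on_E m n Q -> ec_add m n P Q = ec_add m n Q P.
Proof.
case=> hM hN hMN; case: P => [|x1 y1]; case: Q => [|x2 y2] // e1 e2.
case E: (ec_add m n (EPt x1 y1) _) => [|x3 y3].
- move: (add_inf E) => [-> ->]. by rewrite -{2}(opprK y1) add_negr.
- have [c [l [hR -> -> ->]]] := FL e1 e2 E.
  by rewrite (CL hM hN hMN (Rel_sym12 hR)).
Qed.

Lemma add_neg m n P Q : NS m n -> on_E m n P -> on_E m n Q ->
  ec_add m n (negp P) (negp Q) = negp (ec_add m n P Q).
Proof.
case=> hM hN hMN; case: P => [|x1 y1]; case: Q => [|x2 y2] // e1 e2.
case E: (ec_add m n (EPt x1 y1) _) => [|x3 y3].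
- move: (add_inf E) => [-> ->] /=. by rewrite !opprK !eqxx.
- have [c [l [hR -> -> ->]]] := FL e1 e2 E.
  have h1 : forall x, - (c + l * x) = - c + - l * x by move=> x; ring.
  rewrite [negp (EPt x1 _)]/= [negp (EPt x2 _)]/= !h1 (CL hM hN hMN (Rel_neg hR)) /=.
  by congr EPt; ring.
Qed.

Lemma add_cancel m n P Q : NS m n -> on_E m n P -> on_E m n Q ->
  ec_add m n (ec_add m n P Q) (negp Q) = P.
Proof.
case=> hM hN hMN; case: P => [|x1 y1]; case: Q => [|x2 y2] // e1 e2.
- by rewrite /= opprK !eqxx.
- case E: (ec_add m n (EPt x1 y1) _) => [|x3 y3].
  + by move: (add_inf E) => [-> ->] /=; rewrite opprK.
  + have [c [l [hR -> -> ->]]] := FL e1 e2 E.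
    have h1 : forall x, - (c + l * x) = - c + - l * x by move=> x; ring.
    rewrite [negp (EPt x2 _)]/= !h1 (CL hM hN hMN (Rel_sym13 (Rel_neg hR))).
    by congr EPt; ring.
Qed.

Lemma mulS m n d P : ec_mul m n d.+1 P = ec_add m n P (ec_mul m n d P).
Proof. by []. Qed.
Lemma mul1 m n P : ec_mul m n 1 P = P.
Proof. by rewrite mulS addP0. Qed.
Lemma mul2 m n P : ec_mul m n 2 P = ec_add m n P P.
Proof. by rewrite mulS mul1. Qed.

Lemma mul_on m n d P : NS m n -> on_E m n P -> on_E m n (ec_mul m n d P).
Proof. by move=> hN hP; elim: d => [|d IH] //; rewrite mulS; apply: add_on. Qed.

Lemma step m n d P : NS m n -> on_E m n P ->
  ec_add m n (ec_mul m n d.+1 P) (negp P) = ec_mul m n d P.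
Proof.
move=> hN hP; have hd := mul_on d hN hP.
by rewrite mulS (add_comm hN hP hd) (add_cancel hN hd hP).
Qed.

Lemma mul_inf m n d x y : ec_mul m n d.+1 (EPt x y) = EInf ->
  ec_mul m n d (EPt x y) = EPt x (- y).
Proof. by rewrite mulS => /add_inf. Qed.

Lemma neg_self (P : ecpt) : P <> EInf -> P = negp P -> exists e, P = EPt e 0.
Proof.
case: P => // x y _ [h]; exists x; congr EPt; move: h; lra.
Qed.

Lemma Rel_sq M N c l x1 x2 x3 s : cf M N (- s) = 0 -> Rel M N c l x1 x2 x3 ->
  (x1 + s) * (x2 + s) * (x3 + s) = (c - l * s) ^+ 2.
Proof.
move=> h0 /(Rel_poly (- s)); rewrite h0 => h.
have -> : (c - l * s) ^+ 2 = - (0 - (c + l * - s) ^+ 2) by ring.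
by rewrite h; ring.
Qed.

Lemma cf_root0 M N : cf M N (- 0) = 0.
Proof. by rewrite /cf oppr0 !mul0r. Qed.
Lemma cf_rootM M N : cf M N (- M) = 0.
Proof. by rewrite /cf addNr mulr0 mul0r. Qed.
Lemma cf_rootN M N : cf M N (- N) = 0.
Proof. by rewrite /cf addNr mulr0. Qed.

Lemma cf_nz M N x : cf M N x != 0 -> [/\ x + 0 != 0, x + M != 0 & x + N != 0].
Proof. by rewrite /cf !mulf_eq0 addr0 !negb_or => /andP[/andP[-> ->] ->]. Qed.

Lemma dbl_sq M N c l x x2 s : cf M N (- s) = 0 -> Rel M N c l x x x2 -> x + s != 0 ->
  exists r, x2 + s = r ^+ 2.
Proof.
move=> h0 hR hx; exists ((c - l * s) / (x + s)).
rewrite expr_div_n -(Rel_sq h0 hR); field; done.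
Qed.

Lemma chain_sq (u1 u2 u3 u4 r1 r2 r3 : rat) : u1 != 0 -> u2 != 0 -> u3 != 0 ->
  u1 * u1 * u2 = r1 ^+ 2 -> u1 * u2 * u3 = r2 ^+ 2 -> u1 * u3 * u4 = r3 ^+ 2 ->
  u4 = (r3 * r1 / (r2 * u1)) ^+ 2.
Proof.
move=> h1 h2 h3 e1 e2 e3.
have hr2 : r2 ^+ 2 != 0 by rewrite -e2 !mulf_neq0.
have hr2' : r2 != 0 by apply: contraNneq hr2 => ->; rewrite expr0n.
rewrite expr_div_n !exprMn -e1 -e2 -e3; field.
by rewrite h1 h2 h3 /=.
Qed.

Lemma Rel_dbl M N c l x x3 : Rel M N c l x x x3 ->
  4%:R * cf M N x * x3 = (x ^+ 2 - M * N) ^+ 2.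
Proof.
move=> hR; have ht := Rel_tan hR; have ho := Rel_on1 hR.
case: (hR) => h1 _ _.
have -> : x3 = l ^+ 2 - (M + N) - x - x by move: h1; set L := l ^+ 2; lra.
rewrite -ho.
transitivity ((2%:R * l * (c + l * x)) ^+ 2 - 4%:R * (c + l * x) ^+ 2 * (M + N + 2%:R * x)); first by ring.
by rewrite -ht ho /cf /cfd; ring.
Qed.

Definition sqr (r : rat) := exists z, r = z ^+ 2.

Definition SQ3 (M N e : rat) := [/\ sqr e, sqr (e + M) & sqr (e + N)].

Lemma pt_nz m n Q : on_E m n Q -> Q <> EInf -> Q <> negp Q ->
  exists x y, [/\ Q = EPt x y, y != 0 & cf m%:~R n%:~R x != 0].
Proof.
case: Q => // x y hQ _ hn; exists x, y.
have hy : y != 0 by apply/eqP => y0; apply: hn; rewrite y0 /= oppr0.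
have hQ' : y ^+ 2 = cf m%:~R n%:~R x := hQ.
by split => //; rewrite -hQ' sqrf_eq0.
Qed.

Lemma SQ3_dbl M N c l x x2 : Rel M N c l x x x2 -> cf M N x != 0 -> SQ3 M N x2.
Proof.
move=> hR /cf_nz [h0 hM hN]; split.
- have [r hr] := dbl_sq (cf_root0 M N) hR h0; exists r; by rewrite -hr addr0.
- exact: (dbl_sq (cf_rootM M N) hR hM).
- exact: (dbl_sq (cf_rootN M N) hR hN).
Qed.

Lemma chain1 M N c1 l1 c2 l2 c3 l3 x x2 x3 e s : cf M N (- s) = 0 ->
  Rel M N c1 l1 x x x2 -> Rel M N c2 l2 x x2 x3 -> Rel M N c3 l3 x x3 e ->
  x + s != 0 -> x2 + s != 0 -> x3 + s != 0 -> sqr (e + s).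
Proof.
move=> h0 h1 h2 h3 n1 n2 n3.
exact: ex_intro (chain_sq n1 n2 n3 (Rel_sq h0 h1) (Rel_sq h0 h2) (Rel_sq h0 h3)).
Qed.

Lemma out_I m n P : NS m n -> on_E m n P ->
  (has_order m n P 4 \/ has_order m n P 8) ->
  exists e, cf m%:~R n%:~R e = 0 /\ SQ3 m%:~R n%:~R e.
Proof.
move=> hN hP hO.
have hP1 : P <> EInf.
  by case: hO => -[_ [_ hlt]]; move: (hlt 1%N erefl erefl); rewrite mul1.
case: P hP hP1 hO => // x y hP _ hO.
have hnP : negp (EPt x y) = EPt x (- y) by [].
have hcf : cf m%:~R n%:~R x = y ^+ 2 by [].
case: hO => -[_ [hN0 hlt]].
-
  have h3 := mul_inf hN0.
  have h2 : ec_mul m n 2 (EPt x y) = negp (ec_mul m n 2 (EPt x y)).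
    by rewrite -{1}(step 2 hN hP) h3 -hnP (add_neg hN hP hP) -mul2.
  have [e he] := neg_self (hlt 2%N erefl erefl) h2.
  have hy : y != 0.
    apply/eqP => y0; move: he; rewrite mul2 y0 -{2}oppr0 add_negr; done.
  rewrite mul2 in he.
  have [c [l [hR _ _ _]]] := FL hP hP he.
  exists e; split.
  + have := add_on hN hP hP; rewrite he /= expr0n => h; by rewrite /cf -h.
  + apply: (SQ3_dbl hR); by rewrite hcf sqrf_eq0.
-
  have h7 := mul_inf hN0.
  have hP2 := mul_on 2 hN hP; have hP3 := mul_on 3 hN hP; have hP4 := mul_on 4 hN hP.
  have h6 : ec_mul m n 6 (EPt x y) = negp (ec_mul m n 2 (EPt x y)).
    by rewrite -(step 6 hN hP) h7 -hnP (add_neg hN hP hP) -mul2.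
  have h5 : ec_mul m n 5 (EPt x y) = negp (ec_mul m n 3 (EPt x y)).
    by rewrite -(step 5 hN hP) h6 (add_neg hN hP2 hP) (add_comm hN hP2 hP) -mulS.
  have h4 : ec_mul m n 4 (EPt x y) = negp (ec_mul m n 4 (EPt x y)).
    by rewrite -{1}(step 4 hN hP) h5 (add_neg hN hP3 hP) (add_comm hN hP3 hP) -mulS.
  have hn2 : ec_mul m n 2 (EPt x y) <> negp (ec_mul m n 2 (EPt x y)).
    move=> h; have e7 : ec_mul m n 7 (EPt x y) = ec_mul m n 3 (EPt x y).
      by rewrite mulS h6 -h.
    apply: (hlt 4%N erefl erefl); rewrite mulS -e7 h7; exact: add_negr.
  have hn3 : ec_mul m n 3 (EPt x y) <> negp (ec_mul m n 3 (EPt x y)).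
    move=> h; have e7 : ec_mul m n 7 (EPt x y) = ec_mul m n 3 (EPt x y).
      by rewrite (mulS _ _ 6) (mulS _ _ 5) h5 -h -(mulS _ _ 3) -(mulS _ _ 4) h5 -h.
    apply: (hlt 4%N erefl erefl); rewrite mulS -e7 h7; exact: add_negr.
  have [x2 [y2 [E2 hy2 hc2]]] := pt_nz hP2 (hlt 2%N erefl erefl) hn2.
  have [x3 [y3 [E3 hy3 hc3]]] := pt_nz hP3 (hlt 3%N erefl erefl) hn3.
  have [e He] := neg_self (hlt 4%N erefl erefl) h4.
  have hy : y != 0.
    apply/eqP => y0; move: E2; rewrite mul2 y0 -{2}oppr0 add_negr; done.
  have hc : cf m%:~R n%:~R x != 0 by rewrite hcf sqrf_eq0.
  have e2 : y2 ^+ 2 = cf m%:~R n%:~R x2 by move: hP2; rewrite E2.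
  have e3 : y3 ^+ 2 = cf m%:~R n%:~R x3 by move: hP3; rewrite E3.
  have F2 : ec_add m n (EPt x y) (EPt x y) = EPt x2 y2 by rewrite -mul2.
  have F3 : ec_add m n (EPt x y) (EPt x2 y2) = EPt x3 y3 by rewrite -E2 -mulS.
  have F4 : ec_add m n (EPt x y) (EPt x3 y3) = EPt e 0 by rewrite -E3 -mulS.
  have [c1 [l1 [R1 _ _ _]]] := FL hP hP F2.
  have [c2 [l2 [R2 _ _ _]]] := FL hP e2 F3.
  have [c3 [l3 [R3 _ _ _]]] := FL hP e3 F4.
  exists e; split.
  + have := add_on hN hP (mul_on 3 hN hP); rewrite E3 F4 /= expr0n => h; by rewrite /cf -h.
  + case: (cf_nz hc) => a0 aM aN; case: (cf_nz hc2) => b0 bM bN;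
    case: (cf_nz hc3) => d0 dM dN; split.
    * have [r hr] := chain1 (cf_root0 _ _) R1 R2 R3 a0 b0 d0; exists r; by rewrite -hr addr0.
    * exact: (chain1 (cf_rootM _ _) R1 R2 R3 aM bM dM).
    * exact: (chain1 (cf_rootN _ _) R1 R2 R3 aN bN dN).
Qed.

Lemma tau_id M N e x : cf M N e = 0 -> x - e != 0 ->
  let t := cf M N x / (x - e) ^+ 2 - (M + N) - x - e in
  cf M N t * (x ^+ 2 - M * N) ^+ 2 = cf M N x * (t ^+ 2 - M * N) ^+ 2.
Proof.
rewrite /cf => /eqP; rewrite !mulf_eq0 => /orP[/orP[]|] /eqP he hx /=.
- rewrite he subr0 in hx *; field; done.
- have eX : e = - M by rewrite -[e]subr0 -he; ring.
  rewrite eX opprK in hx *; field; done.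
- have eX : e = - N by rewrite -[e]subr0 -he; ring.
  rewrite eX opprK in hx *; field; done.
Qed.

Lemma quart6 M N c1 l1 c2 l2 x x2 e :
  Rel M N c1 l1 x x x2 -> Rel M N c2 l2 x x2 e -> c2 + l2 * e = 0 ->
  cf M N e = 0 -> cf M N x != 0 ->
  4%:R * cf M N x2 * x2 = (x2 ^+ 2 - M * N) ^+ 2.
Proof.
move=> R1 R2 he hce hcx.
have R1' := Rel_dbl R1.
have hxe : x - e != 0.
  apply/eqP => h; have hx : x = e by move: h; lra.
  by move: hcx; rewrite hx hce eqxx.
have hc2 : c2 = - (l2 * e) by move: he; lra.
have ho := Rel_on1 R2.
have hl : l2 ^+ 2 = cf M N x / (x - e) ^+ 2.
  by rewrite -ho hc2; field.
case: R2 => h1 _ _.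
have hx2 : x2 = cf M N x / (x - e) ^+ 2 - (M + N) - x - e.
  by rewrite -hl; move: h1; set L := l2 ^+ 2; lra.
apply: (mulfI hcx).
transitivity (cf M N x2 * (4%:R * cf M N x * x2)); first by ring.
rewrite R1' hx2 tau_id //.
Qed.

Lemma out_II m n P : NS m n -> on_E m n P ->
  (has_order m n P 3 \/ has_order m n P 6) ->
  exists X, SQ3 m%:~R n%:~R X /\
    4%:R * cf m%:~R n%:~R X * X = (X ^+ 2 - m%:~R * n%:~R) ^+ 2.
Proof.
move=> hN hP hO.
have hP1 : P <> EInf.
  by case: hO => -[_ [_ hlt]]; move: (hlt 1%N erefl erefl); rewrite mul1.
case: P hP hP1 hO => // x y hP _ hO.
have hnP : negp (EPt x y) = EPt x (- y) by [].
have hcf : cf m%:~R n%:~R x = y ^+ 2 by [].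
case: hO => -[_ [hN0 hlt]].
-
  have h2 := mul_inf hN0; rewrite mul2 in h2.
  have hy : y != 0.
    apply/eqP => y0; move: (hlt 2%N erefl erefl); rewrite mul2 y0 -{2}oppr0 add_negr; done.
  have hc : cf m%:~R n%:~R x != 0 by rewrite hcf sqrf_eq0.
  have [c [l [hR _ _ _]]] := FL hP hP h2.
  exists x; split; first exact: (SQ3_dbl hR hc).
  exact: Rel_dbl hR.
-
  have h5 := mul_inf hN0.
  have hP2 := mul_on 2 hN hP; have hP3 := mul_on 3 hN hP.
  have h4 : ec_mul m n 4 (EPt x y) = negp (ec_mul m n 2 (EPt x y)).
    by rewrite -(step 4 hN hP) h5 -hnP (add_neg hN hP hP) -mul2.
  have h3 : ec_mul m n 3 (EPt x y) = negp (ec_mul m n 3 (EPt x y)).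
    by rewrite -{1}(step 3 hN hP) h4 (add_neg hN hP2 hP) (add_comm hN hP2 hP) -mulS.
  have hn2 : ec_mul m n 2 (EPt x y) <> negp (ec_mul m n 2 (EPt x y)).
    move=> h; have e5 : ec_mul m n 5 (EPt x y) = ec_mul m n 3 (EPt x y).
      by rewrite (mulS _ _ 4) h4 -h.
    apply: (hlt 4%N erefl erefl); rewrite mulS -e5 h5; exact: add_negr.
  have [x2 [y2 [E2 hy2 hc2]]] := pt_nz hP2 (hlt 2%N erefl erefl) hn2.
  have [e He] := neg_self (hlt 3%N erefl erefl) h3.
  have hy : y != 0.
    apply/eqP => y0; move: E2; rewrite mul2 y0 -{2}oppr0 add_negr; done.
  have hc : cf m%:~R n%:~R x != 0 by rewrite hcf sqrf_eq0.
  have e2 : y2 ^+ 2 = cf m%:~R n%:~R x2 by move: hP2; rewrite E2.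
  have F2 : ec_add m n (EPt x y) (EPt x y) = EPt x2 y2 by rewrite -mul2.
  have F3 : ec_add m n (EPt x y) (EPt x2 y2) = EPt e 0 by rewrite -E2 -mulS.
  have [c1 [l1 [R1 _ _ _]]] := FL hP hP F2.
  have [c2 [l2 [R2 _ _ hy3]]] := FL hP e2 F3.
  have hce : cf m%:~R n%:~R e = 0.
    have := add_on hN hP hP2; rewrite E2 F3 /= expr0n => h; by rewrite /cf -h.
  exists x2; split; first exact: (SQ3_dbl R1 hc).
  apply: (quart6 R1 R2 _ hce hc).
  by apply/eqP; rewrite -oppr_eq0 -hy3.
Qed.

Local Close Scope ring_scope.

Lemma logn_sq l A D C : prime l -> 0 < A -> 0 < D -> A * D ^ 2 = C ^ 2 -> ~~ odd (logn l A).
Proof.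
move=> pl A0 D0 h.
have C0 : 0 < C.
  have : 0 < C ^ 2 by rewrite -h muln_gt0 A0 expn_gt0 D0.
  by rewrite expn_gt0 orbF.
have := congr1 (logn l) h; rewrite lognM ?expn_gt0 ?D0 // !lognX => /(congr1 odd).
by rewrite oddD !oddM /= addbF => ->.
Qed.

Lemma sqf_logn k l : squarefree k -> prime l -> l %| k -> logn l k = 1.
Proof.
case=> k0 hsq pl lk.
have hk : k = k %/ l * l by rewrite divnK.
have k'0 : 0 < k %/ l by rewrite divn_gt0 ?prime_gt0 // dvdn_leq.
have nd : ~~ (l %| k %/ l).
  apply/negP => h; move: (hsq l (prime_gt1 pl)); rewrite [X in _ %| X]hk.
  by rewrite dvdn_mul.
rewrite hk (lognM _ k'0 (prime_gt0 pl)) (logn_prime _ pl) eqxx.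
by rewrite (@logn_coprime l (k %/ l)) // prime_coprime.
Qed.

Lemma only3 k : squarefree k -> (forall l, prime l -> l %| k -> l = 3) -> k = 1 \/ k = 3.
Proof.
move=> [k0 hsq] h.
case: (ltngtP k 1) => [|k1|->]; [by rewrite ltnS leqn0 => /eqP k00; move: k0; rewrite k00 | | by left].
have p3 : pdiv k = 3 by apply: h; [exact: pdiv_prime | exact: pdiv_dvd].
have d3 : 3 %| k by rewrite -p3 pdiv_dvd.
set k' := k %/ 3.
have hk : k = k' * 3 by rewrite divnK.
case: (ltngtP k' 1) => [|k1'|e1]; last by right; rewrite hk e1.
- by rewrite ltnS leqn0 => /eqP e; move: k0; rewrite hk e.
- have : pdiv k' = 3 by apply: h; [exact: pdiv_prime | apply: dvdn_trans (pdiv_dvd _) _; rewrite hk dvdn_mulr].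
  move=> e; have : 3 %| k' by rewrite -e pdiv_dvd.
  move=> d; exfalso; move: (hsq 3 erefl); rewrite hk.
  by rewrite dvdn_mul.
Qed.

Lemma NT_I p q k : 0 < p -> 0 < q -> coprime p q -> squarefree k ->
  (exists D C, 0 < D /\ (p * k) * D ^ 2 = C ^ 2) ->
  (exists D C, 0 < D /\ ((p + q) * k) * D ^ 2 = C ^ 2) -> k = 1.
Proof.
move=> p0 q0 cpq hk [D1 [C1 [D10 h1]]] [D2 [C2 [D20 h2]]].
case: hk => k0 hsq.
case: (ltngtP k 1) => [|k1|//]; first by rewrite ltnS leqn0 => /eqP e; move: k0; rewrite e.
have pl := pdiv_prime k1; have lk := pdiv_dvd k.
have sl := sqf_logn (conj k0 hsq) pl lk.
have dvd_of : forall A, 0 < A -> forall D C, 0 < D -> (A * k) * D ^ 2 = C ^ 2 -> pdiv k %| A.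
  move=> A A0 D C D0 h.
  have Ak0 : 0 < A * k by rewrite muln_gt0 A0 k0.
  have := logn_sq pl Ak0 D0 h.
  rewrite lognM // sl oddD /= addbT negbK => ho.
  have : 0 < logn (pdiv k) A by case: (logn _ _) ho.
  by rewrite logn_gt0 mem_primes => /and3P[].
have dp := dvd_of p p0 _ _ D10 h1.
have pq0 : 0 < p + q by rewrite addn_gt0 p0.
have dpq := dvd_of (p + q) pq0 _ _ D20 h2.
rewrite dvdn_addr // in dpq.
move: cpq; rewrite /coprime => /eqP g.
have : pdiv k %| gcdn p q by rewrite dvdn_gcd dp dpq.
by rewrite g dvdn1 => /eqP e; move: (prime_gt1 pl); rewrite e.
Qed.

Lemma NT_II k H D C : squarefree k -> 0 < D -> k * D ^ 2 = C ^ 2 * H ->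
  (forall l, prime l -> l %| H -> l = 3) -> k = 1 \/ k = 3.
Proof.
move=> hk D0 h hH; apply: only3 => // l pl lk.
case: (hk) => k0 _.
have H0 : 0 < H.
  have : 0 < C ^ 2 * H by rewrite -h muln_gt0 k0 expn_gt0 D0.
  by rewrite muln_gt0 => /andP[].
case: (eqVneq l 3) => // nl3.
have nlH : ~~ (l %| H) by apply/negP => /(hH l pl) /eqP; rewrite (negbTE nl3).
have h' : (k * H) * D ^ 2 = (C * H) ^ 2 by rewrite mulnAC h; ring.
have kH0 : 0 < k * H by rewrite muln_gt0 k0 H0.
have := logn_sq pl kH0 D0 h'.
have cH : coprime l H by rewrite prime_coprime.
by rewrite lognM // (sqf_logn hk pl lk) (logn_coprime cH).
Qed.

Local Open Scope ring_scope.

Lemma rat_sq_nat (A : nat) (z : rat) : (0 < A)%N -> (A%:R : rat) = z ^+ 2 ->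
  exists D C : nat, (0 < D)%N /\ (A * D ^ 2)%N = (C ^ 2)%N.
Proof.
move=> A0 hA.
have hz : z = (numq z)%:~R / (denq z)%:~R by rewrite divq_num_den.
have b0 : (denq z)%:~R != 0 :> rat by rewrite intr_eq0 denq_neq0.
have E : (Posz A * denq z ^+ 2 = numq z ^+ 2)%R.
  apply: (@intr_inj rat); rewrite rmorphM !rmorphXn /=.
  rewrite (_ : (Posz A)%:~R = A%:R :> rat) // hA {1}hz; field; done.
exists `|denq z|%N, `|numq z|%N; split; first by rewrite absz_gt0 denq_neq0.
by have := congr1 absz E; rewrite abszM !abszX absz_nat.
Qed.

Lemma no_both (l : nat) (a b : int) : prime l -> coprime `|a| `|b| ->
  (Posz l %| a)%Z -> (Posz l %| b)%Z -> False.
Proof.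
move=> pl cab; rewrite !dvdzE /= => la lb.
move: cab; rewrite /coprime => /eqP g.
have : (l %| gcdn `|a| `|b|)%N by rewrite dvdn_gcd la lb.
by rewrite g dvdn1 => /eqP e; move: (prime_gt1 pl); rewrite e.
Qed.

Lemma prime3 (l : nat) (a b : int) : prime l -> coprime `|a| `|b| ->
  (l %| `|(a ^+ 3 * (a - 2%:R * b))%R|)%N -> (l %| `|(b ^+ 3 * (2%:R * a - b))%R|)%N -> l = 3%N.
Proof.
move=> pl cab; rewrite !abszM !Euclid_dvdM // !orbb.
have E : forall z : int, (l %| `|z|)%N = (Posz l %| z)%Z by move=> z; rewrite dvdzE.
rewrite !E => /orP[ha|ha] /orP[hb|hb].
- by case: (no_both pl cab ha hb).
- exfalso; apply: (no_both pl cab ha).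
  rewrite (_ : b = 2%:R * a - (2%:R * a - b)); last by ring.
  by apply: rpredB => //; apply: dvdz_mull.
- exfalso; apply: (no_both pl cab _ hb).
  rewrite (_ : a = (a - 2%:R * b) + 2%:R * b); last by ring.
  by apply: rpredD => //; apply: dvdz_mull.
- have h3a : (Posz l %| 3%:R * a)%Z.
    rewrite (_ : 3%:R * a = 2%:R * (2%:R * a - b) - (a - 2%:R * b)); last by ring.
    by apply: rpredB => //; apply: dvdz_mull.
  have h3b : (Posz l %| 3%:R * b)%Z.
    rewrite (_ : 3%:R * b = (2%:R * a - b) - 2%:R * (a - 2%:R * b)); last by ring.
    by apply: rpredB => //; apply: dvdz_mull.
  move: h3a h3b; rewrite -!E !abszM !Euclid_dvdM //.
  have d3 : (l %| 3)%N -> l = 3%N by move=> h; apply/eqP; rewrite -(dvdn_prime2 pl).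
  case/orP => [h3|ha']; first by move=> _; apply: d3.
  case/orP => [h3|hb']; first by apply: d3.
  by exfalso; apply: (no_both pl cab); rewrite -E.
Qed.

Lemma coreII (p q k : nat) (u v w : rat) : (0 < p)%N -> (0 < q)%N -> coprime p q ->
  squarefree k -> u != 0 ->
  - ((p * k)%N%:R) = v ^+ 2 - u ^+ 2 -> ((q * k)%N%:R) = w ^+ 2 - u ^+ 2 ->
  u * v + u * w + v * w = 0 -> k = 1%N \/ k = 3%N.
Proof.
move=> p0 q0 cpq hk u0 hMe hNe hrel.
case: (hk) => k0 _.
have huv : u + v != 0.
  have : (u + v) * (u + w) = u ^+ 2 by rewrite -[RHS]addr0 -hrel; ring.
  by apply: contra_eq_neq => ->; rewrite mul0r eq_sym sqrf_eq0.
set t := (u + v) / u.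
have t0 : t != 0 by rewrite /t mulf_neq0 ?invr_eq0.
have hw : w = - (u * v) / (u + v).
  have h : w * (u + v) = - (u * v) by rewrite -[RHS]addr0 -hrel; ring.
  by apply: (mulIf huv); rewrite h; field.
have hM : - ((p * k)%N%:R) = u ^+ 2 * t * (t - 2%:R) by rewrite hMe /t; field.
have hN : ((q * k)%N%:R) = u ^+ 2 * (1 - 2%:R * t) / t ^+ 2.
  by rewrite hNe hw /t; field; rewrite u0 huv.
set a := numq t; set b := denq t; set c := numq u; set d := denq u.
have tE : t = a%:~R / b%:~R by rewrite divq_num_den.
have uE : u = c%:~R / d%:~R by rewrite divq_num_den.
have a0 : a != 0 by rewrite numq_eq0.
have c0 : c != 0 by rewrite numq_eq0.
have b0 : b != 0 by rewrite denq_neq0.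
have d0 : d != 0 by rewrite denq_neq0.
have b0' : b%:~R != 0 :> rat by rewrite intr_eq0.
have d0' : d%:~R != 0 :> rat by rewrite intr_eq0.
have a0' : a%:~R != 0 :> rat by rewrite intr_eq0.
have E1 : - Posz (p * k) * d ^+ 2 * b ^+ 2 = c ^+ 2 * a * (a - 2%:R * b).
  apply: (@intr_inj rat); rewrite !(rmorphM, rmorphXn, rmorphN, rmorphB, rmorph_nat) /=.
  have -> : ((Posz p)%:~R * (Posz k)%:~R : rat) = (p * k)%:R by rewrite natrM.
  rewrite -mulNr hM tE uE; field.
  by apply/andP; split; [exact: b0' | exact: d0'].
have E2 : Posz (q * k) * d ^+ 2 * a ^+ 2 = c ^+ 2 * b * (b - 2%:R * a).
  apply: (@intr_inj rat); rewrite !(rmorphM, rmorphXn, rmorphN, rmorphB, rmorph_nat) /=.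
  have -> : ((Posz q)%:~R * (Posz k)%:~R : rat) = (q * k)%:R by rewrite natrM.
  rewrite hN tE uE; field.
  by apply/and3P; split; [exact: b0' | exact: a0' | exact: d0'].
have K0 : Posz k * d ^+ 2 != 0.
  by rewrite mulf_neq0 ?expf_neq0 // -lt0n.
have E3 : Posz p * (b ^+ 3 * (2%:R * a - b)) = Posz q * (a ^+ 3 * (a - 2%:R * b)).
  apply: (mulfI K0).
  transitivity ((- Posz (p * k) * d ^+ 2 * b ^+ 2) * (b * (b - 2%:R * a))).
    by rewrite PoszM; ring.
  rewrite E1.
  transitivity ((Posz (q * k) * d ^+ 2 * a ^+ 2) * (a * (a - 2%:R * b))).
    by rewrite E2; ring.
  by rewrite PoszM; ring.
have E4 : - Posz (p * k) * d ^+ 2 * b ^+ 2 * a ^+ 2 = c ^+ 2 * (a ^+ 3 * (a - 2%:R * b)).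
  by rewrite E1; ring.
set X := a ^+ 3 * (a - 2%:R * b); set Y := b ^+ 3 * (2%:R * a - b).
have N3 : (p * `|Y|)%N = (q * `|X|)%N.
  by have := congr1 absz E3; rewrite [in LHS]abszM [in RHS]abszM !absz_nat.
have N4 : (p * k * (`|d| * `|b| * `|a|) ^ 2)%N = (`|c| ^ 2 * `|X|)%N.
  have := congr1 absz E4; rewrite !abszM abszN absz_nat => h.
  by apply: eq_trans (eq_trans _ h) _; ring.
have pX : (p %| `|X|)%N by rewrite -(Gauss_dvdr _ cpq) -N3 dvdn_mulr.
set H := (`|X| %/ p)%N.
have hX : (`|X| = H * p)%N by rewrite divnK.
have hY : (`|Y| = q * H)%N.
  by apply/eqP; rewrite -(eqn_pmul2l p0) N3 hX; apply/eqP; ring.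
have hK : (k * (`|d| * `|b| * `|a|) ^ 2)%N = (`|c| ^ 2 * H)%N.
  apply/eqP; rewrite -(eqn_pmul2l p0); apply/eqP.
  transitivity (p * k * (`|d| * `|b| * `|a|) ^ 2)%N; first by ring.
  by rewrite N4 hX; ring.
have D0 : (0 < `|d| * `|b| * `|a|)%N by rewrite !muln_gt0 !absz_gt0 d0 b0 a0.
apply: (NT_II hk D0 hK) => l pl lH.
apply: (prime3 pl (coprime_num_den t)).
- by rewrite -/X hX dvdn_mulr.
- by rewrite -/Y hY dvdn_mull.
Qed.

Lemma on_proj (M N T X Y : rat) : T != 0 -> Y ^+ 2 * T = X * (X + M * T) * (X + N * T) ->
  (Y / T) ^+ 2 = (X / T) * (X / T + M) * (X / T + N).
Proof.
move=> hT h; apply/eqP; rewrite -subr_eq0; apply/eqP.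
transitivity ((Y ^+ 2 * T - X * (X + M * T) * (X + N * T)) / T ^+ 3); first by field.
by rewrite h subrr mul0r.
Qed.

Lemma phi_on m n X0 X1 X2 X3 :
  X0 ^+ 2 + m%:~R * X1 ^+ 2 = X2 ^+ 2 -> X0 ^+ 2 + n%:~R * X1 ^+ 2 = X3 ^+ 2 ->
  on_E m n (phi m n X0 X1 X2 X3).
Proof.
move=> h1 h2; rewrite /phi; case: eqP => [//|/eqP hT] /=.
apply: on_proj hT _.
move: h1 h2; set M : rat := m%:~R; set N : rat := n%:~R => h1 h2.
apply/eqP; rewrite -subr_eq0; apply/eqP.
transitivity (M ^+ 2 * N ^+ 2 * (M - N) ^+ 2 * (X3 - X0) * (X2 ^+ 2 - (X0 ^+ 2 + M * X1 ^+ 2))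
  + M ^+ 2 * N ^+ 2 * (M - N) ^+ 2 * (X0 - X2) * (X3 ^+ 2 - (X0 ^+ 2 + N * X1 ^+ 2))).
  by ring.
by rewrite h1 h2 !subrr !mulr0 addr0.
Qed.

Lemma preII (M N X : rat) : M * N != 0 -> SQ3 M N X ->
  4%:R * cf M N X * X = (X ^+ 2 - M * N) ^+ 2 ->
  exists u v w, [/\ u != 0, M = v ^+ 2 - u ^+ 2, N = w ^+ 2 - u ^+ 2 & u * v + u * w + v * w = 0].
Proof.
move=> hMN [[u hu] [v hv] [w hw]] hq.
have eM : M = v ^+ 2 - u ^+ 2 by rewrite -hv hu; ring.
have eN : N = w ^+ 2 - u ^+ 2 by rewrite -hw hu; ring.
have u0 : u != 0.
  apply/eqP => u0; move: hq; rewrite hu u0 expr0n /= /cf !(mul0r, mulr0) sub0r sqrrN => /esym/eqP.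
  by rewrite sqrf_eq0 (negbTE hMN).
have hS : (u ^+ 2 * v ^+ 2 + u ^+ 2 * w ^+ 2 - v ^+ 2 * w ^+ 2) ^+ 2 = (2%:R * u ^+ 2 * v * w) ^+ 2.
  transitivity ((X ^+ 2 - M * N) ^+ 2); first by rewrite eM eN hu; ring.
  by rewrite -hq /cf eM eN hu; ring.
move/eqP: hS; rewrite eqf_sqr => /orP[] /eqP hS.
- have : (u * (v - w) - v * w) * (u * (v - w) + v * w) = 0.
    by transitivity ((u ^+ 2 * v ^+ 2 + u ^+ 2 * w ^+ 2 - v ^+ 2 * w ^+ 2) - 2%:R * u ^+ 2 * v * w);
      [ring | rewrite hS subrr].
  move/eqP; rewrite mulf_eq0 => /orP[] /eqP h.
  + exists u, v, (- w); split => //; first by rewrite sqrrN.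
    by rewrite -[RHS]h; ring.
  + exists u, (- v), w; split => //; first by rewrite sqrrN.
    by rewrite -[RHS]oppr0 -h; ring.
- have : (u * (v + w) - v * w) * (u * (v + w) + v * w) = 0.
    by transitivity ((u ^+ 2 * v ^+ 2 + u ^+ 2 * w ^+ 2 - v ^+ 2 * w ^+ 2) + 2%:R * u ^+ 2 * v * w);
      [ring | rewrite hS; ring].
  move/eqP; rewrite mulf_eq0 => /orP[] /eqP h.
  + exists u, (- v), (- w); split => //; try by rewrite sqrrN.
    by rewrite -[RHS]oppr0 -h; ring.
  + exists u, v, w; split => //.
    by rewrite -[RHS]h; ring.
Qed.

Local Close Scope ring_scope.
Unset Implicit Arguments.
Theorem theorem4p1 (p q k : nat) :
  (0 < p)%N -> (0 < q)%N -> coprime p q -> squarefree k ->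
  let m : int := (- Posz (p * k)%N)%R in
  let n : int := Posz (q * k)%N in
  ((concordant_torsion 4 m n \/ concordant_torsion 8 m n) -> k = 1%N) /\
  ((concordant_torsion 3 m n \/ concordant_torsion 6 m n) -> k = 1%N \/ k = 3%N).
Proof.
move=> p0 q0 cpq hk m n.
have k0 : (0 < k)%N by case: hk.
have hMv : (m%:~R : rat) = (- ((p * k)%N%:R))%R by rewrite /m rmorphN.
have hNv : (n%:~R : rat) = ((q * k)%N%:R)%R by [].
have pk0 : (0 < (p * k)%N%:R :> rat)%R by rewrite ltr0n muln_gt0 p0 k0.
have qk0 : (0 < (q * k)%N%:R :> rat)%R by rewrite ltr0n muln_gt0 q0 k0.
have hNS : NS m n.
  split; rewrite ?hMv ?hNv; apply/eqP => h; lra.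
split.
- move=> hc.
  have [P [hP hO]] : exists P, on_E m n P /\ (has_order m n P 4 \/ has_order m n P 8).
    case: hc => -[X0 [X1 [X2 [X3 [h1 h2 _ hO]]]]]; exists (phi m n X0 X1 X2 X3);
      split; by [exact: phi_on | left | right].
  have [e [hce [[r0 hr0] [r1 hr1] [r2 hr2]]]] := out_I hNS hP hO.
  move: hce; rewrite /cf => /eqP; rewrite !mulf_eq0 => /orP[/orP[]|] /eqP he.
  + exfalso; move: hr1; rewrite he add0r hMv => h.
    have := sqr_ge0 r1; lra.
  + have eE : e = ((p * k)%N%:R)%R by move: he; rewrite hMv => he; lra.
    apply: (NT_I p0 q0 cpq hk).
    * apply: (@rat_sq_nat _ r0); first by rewrite muln_gt0 p0 k0.
      by rewrite -eE.
    * apply: (@rat_sq_nat _ r2); first by rewrite muln_gt0 addn_gt0 p0 k0.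
      by rewrite -hr2 eE hNv mulnDl natrD.
  + exfalso; move: hr0; rewrite hNv in he => h.
    have := sqr_ge0 r0; lra.
- move=> hc.
  have [P [hP hO]] : exists P, on_E m n P /\ (has_order m n P 3 \/ has_order m n P 6).
    case: hc => -[X0 [X1 [X2 [X3 [h1 h2 _ hO]]]]]; exists (phi m n X0 X1 X2 X3);
      split; by [exact: phi_on | left | right].
  have [X [hsq hq]] := out_II hNS hP hO.
  have hMN : (m%:~R * n%:~R != 0 :> rat)%R by case: hNS => h1 h2 _; rewrite mulf_neq0.
  have [u [v [w [u0 eM eN hrel]]]] := preII hMN hsq hq.
  apply: (coreII p0 q0 cpq hk u0 _ _ hrel); by rewrite -?hMv -?hNv.
Qed.
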